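(* Let $I$ and $J$ be two conserved intervals of $\mathcal{P}$. If there exists an element $f\in F_I\cap F_J$, then $\mathrm{Container}(I)=\mathrm{Container}(J)$.
   Context: Let $n\geq 2$ and let $\mathcal{P}=\{P_1,\ldots,P_K\}$ be signed permutations of $\{1,\ldots,n\}$: each $P_k$ is an ordering of $1,\ldots,n$ in which each element carries a sign $+$ or $-$. Assume $P_1=(+1,+2,\ldots,+n)$ and that every $P_k$ has first element $+1$ and last element $+n$. For integers $i\leq j$ write $(i..j)=\{i,\ldots,j\}$. A conserved interval of $\mathcal{P}$ is either a singleton, or a set $(a..c)$ with $a<c$ which (ignoring signs) occupies consecutive positions in every $P_k$ and which, in every $P_k$, has either $+a$ at its left end and $+c$ at its right end, or $-c$ at its left end and $-a$ at its right end. Two intervals $(i..j)$ and $(k..l)$ overlap if $i<k\leq j<l$ or $k<i\leq l<j$. A conserved interval is strong if it has at least two elements and overlaps no other conserved interval. For a conserved interval $I=(a..c)$, a set $\{f_1,\ldots,f_k\}$ with $a=f_1<\cdots<f_k=c$ is a set of frontiers of $I$ if $(f_i..f_j)$ is conserved for all $1\leq i<j\leq k$; $F_I$ denotes the unique inclusion-maximal set of frontiers of $I$ (the union of all sets of frontiers of $I$). $\mathrm{Container}(I)$ is the smallest strong conserved interval containing $I$. *)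

(* Defs.v *)
From mathcomp Require Import all_boot all_order all_algebra.
Set Implicit Arguments. Unset Strict Implicit. Unset Printing Implicit Defensive.
Import Order.TTheory GRing.Theory Num.Theory.
Local Open Scope ring_scope.

(* A signed permutation of {1..n} is a sequence of nonzero integers:
   the absolute value is the element, the sign is the sign. *)
Definition signed_perm (n : nat) (s : seq int) : Prop :=
  perm_eq (map absz s) (iota 1 n).

Definition id_sperm (n : nat) : seq int := [seq (i%:Z) | i <- iota 1 n].

Definition genome_family (n : nat) (P : seq (seq int)) : Prop :=
  (0 < size P)%N /\ nth [::] P 0 = id_sperm n /\
  (forall s, s \in P ->
     [/\ signed_perm n s, head 0 s = 1%:Z & last 0 s = n%:Z]).

Definition sinterval := (nat * nat)%type.

(* In the signed permutation s, the elements a..c (a < c) occupy consecutive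
   positions, with +a at the left end and +c at the right end, or -c at the
   left end and -a at the right end. *)
Definition conserved_in (s : seq int) (a c : nat) : Prop :=
  exists i : nat,
    let b := take (c - a).+1 (drop i s) in
    [/\ size b = (c - a).+1,
        perm_eq (map absz b) (iota a (c - a).+1) &
        (head 0 b = a%:Z /\ last 0 b = c%:Z) \/
        (head 0 b = - (c%:Z) /\ last 0 b = - (a%:Z))].

Definition conserved (n : nat) (P : seq (seq int)) (I : sinterval) : Prop :=
  (I.1 = I.2 /\ (1 <= I.1 <= n)%N) \/
  ((I.1 < I.2)%N /\ forall s, s \in P -> conserved_in s I.1 I.2).

Definition overlap (I J : sinterval) : Prop :=
  (I.1 < J.1 <= I.2 /\ I.2 < J.2)%N \/ (J.1 < I.1 <= J.2 /\ J.2 < I.2)%N.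

Definition strong (n : nat) (P : seq (seq int)) (I : sinterval) : Prop :=
  [/\ (I.1 < I.2)%N, conserved n P I &
      forall J, conserved n P J -> ~ overlap I J].

Definition frontier_set (n : nat) (P : seq (seq int)) (I : sinterval)
    (S : seq nat) : Prop :=
  [/\ I.1 \in S, I.2 \in S,
      (forall f, f \in S -> (I.1 <= f <= I.2)%N) &
      (forall x y, x \in S -> y \in S -> (x < y)%N -> conserved n P (x, y))].

Definition in_frontiers (n : nat) (P : seq (seq int)) (I : sinterval)
    (f : nat) : Prop :=
  exists S, frontier_set n P I S /\ f \in S.

Definition subinterval (I C : sinterval) : Prop := (C.1 <= I.1)%N /\ (I.2 <= C.2)%N.

Definition is_container (n : nat) (P : seq (seq int)) (I C : sinterval) : Prop :=
  [/\ strong n P C, subinterval I C &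
      forall D, strong n P D -> subinterval I D -> subinterval C D].

(* Main.v *)
Require Import Defs.
From mathcomp Require Import all_boot all_order all_algebra.
From mathcomp Require Import zify.

Definition av (s : seq int) (j : nat) : nat := absz (nth 0%R s j).

Definition blk (s : seq int) (p L v : nat) : Prop :=
  [/\ (p + L <= size s)%N,
      (forall x, (v <= x < v + L)%N -> exists2 j, (j < size s)%N & av s j = x) &
      (forall j, (j < size s)%N -> ((p <= j < p + L)%N <-> (v <= av s j < v + L)%N))].

Lemma uniq_pos s j k : uniq (map absz s) -> (j < size s)%N -> (k < size s)%N ->
  av s j = av s k -> j = k.
Proof.
move=> U hj hk E; apply/eqP.
have hj' : (j < size (map absz s))%N by rewrite size_map.
have hk' : (k < size (map absz s))%N by rewrite size_map.
rewrite -(nth_uniq 0%N hj' hk' U) !(nth_map 0%R) //; exact/eqP.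
Qed.
Arguments uniq_pos {s j k}.

Lemma memB s p L x : (p + L <= size s)%N ->
  (x \in map absz (take L (drop p s))) <-> exists2 k, (k < L)%N & av s (p + k) = x.
Proof.
move=> hs.
have sz : size (take L (drop p s)) = L by rewrite size_take size_drop; case: ifP; lia.
split.
  move/(nthP 0%N) => [k hk <-]; rewrite size_map sz in hk; exists k => //.
  by rewrite (nth_map 0%R) ?sz // nth_take // nth_drop.
move=> [k hk <-]; apply/(nthP 0%N); exists k; first by rewrite size_map sz.
by rewrite (nth_map 0%R) ?sz // nth_take // nth_drop.
Qed.

Arguments memB {s p L x}.

Lemma to_blk s p L v : uniq (map absz s) -> (0 < L)%N ->
  size (take L (drop p s)) = L ->
  perm_eq (map absz (take L (drop p s))) (iota v L) -> blk s p L v.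
Proof.
move=> U L0 sz pe.
have hs : (p + L <= size s)%N.
  move: sz; rewrite size_take size_drop; case: ifP; lia.
split => //.
  move=> x hx.
  have : x \in map absz (take L (drop p s)) by rewrite (perm_mem pe) mem_iota.
  move/(memB hs) => [k hk <-]; exists (p + k) => //; lia.
move=> j hj; split.
  move=> hr.
  have : av s j \in iota v L.
    rewrite -(perm_mem pe); apply/(memB hs); exists (j - p); first lia.
    by have -> : (p + (j - p) = j)%N by lia.
  by rewrite mem_iota.
move=> hr.
have : av s j \in map absz (take L (drop p s)) by rewrite (perm_mem pe) mem_iota.
move/(memB hs) => [k hk E].
have -> : j = (p + k)%N by apply: uniq_pos => //; lia.
lia.
Qed.
Arguments to_blk {s p L v}.

Lemma of_blk s p L v : uniq (map absz s) -> blk s p L v ->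
  size (take L (drop p s)) = L /\
  perm_eq (map absz (take L (drop p s))) (iota v L).
Proof.
move=> U [hs su hi].
have sz : size (take L (drop p s)) = L by rewrite size_take size_drop; case: ifP; lia.
split => //.
apply: uniq_perm; first by rewrite map_take map_drop take_uniq // drop_uniq.
  exact: iota_uniq.
move=> x; apply/idP/idP.
  move/(memB hs) => [k hk <-]; rewrite mem_iota; apply/(hi _); lia.
rewrite mem_iota => hx; have [j hj E] := su x hx.
apply/(memB hs); exists (j - p).
  by move: (hi j hj); rewrite E; lia.
by move: (hi j hj); rewrite E => hh; have -> : (p + (j - p) = j)%N by lia.
Qed.
Arguments of_blk {s p L v}.

Definition orient (s : seq int) (p a c : nat) : Prop :=
  (nth 0%R s p = (Posz a) /\ nth 0%R s (p + (c - a)) = (Posz c)) \/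
  (nth 0%R s p = (- (Posz c))%R /\ nth 0%R s (p + (c - a)) = (- (Posz a))%R).

Lemma cons_to s a c : uniq (map absz s) -> conserved_in s a c ->
  exists p, blk s p (c - a).+1 a /\ orient s p a c.
Proof.
move=> U [p [sz pe Ho]]; exists p.
have B := to_blk U (ltn0Sn _) sz pe.
have [hs _ _] := B.
split => //.
have Eh : head 0%R (take (c - a).+1 (drop p s)) = nth 0%R s p.
  by rewrite -nth0 nth_take // nth_drop addn0.
have El : last 0%R (take (c - a).+1 (drop p s)) = nth 0%R s (p + (c - a)).
  by rewrite -nth_last sz /= nth_take // nth_drop.
by rewrite /orient -Eh -El.
Qed.
Arguments cons_to {s a c}.

Lemma cons_of s a c p : uniq (map absz s) -> blk s p (c - a).+1 a -> orient s p a c ->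
  conserved_in s a c.
Proof.
move=> U B Ho; have [sz pe] := of_blk U B; have [hs _ _] := B.
exists p; split => //.
have Eh : head 0%R (take (c - a).+1 (drop p s)) = nth 0%R s p.
  by rewrite -nth0 nth_take // nth_drop addn0.
have El : last 0%R (take (c - a).+1 (drop p s)) = nth 0%R s (p + (c - a)).
  by rewrite -nth_last sz /= nth_take // nth_drop.
by rewrite Eh El.
Qed.
Arguments cons_of {s a c p}.

Lemma avP s j x : nth 0%R s j = Posz x -> av s j = x.
Proof. by rewrite /av => ->. Qed.
Lemma avN s j x : nth 0%R s j = (- Posz x)%R -> av s j = x.
Proof. by rewrite /av => ->; rewrite abszN. Qed.
Arguments avP {s j x}.
Arguments avN {s j x}.

Lemma lemX s a b c : uniq (map absz s) ->
  (forall j, (j < size s)%N -> (0 < av s j)%N) -> (a < b < c)%N ->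
  conserved_in s a b -> conserved_in s a c -> conserved_in s b c.
Proof.
move=> U NZ habc /(cons_to U) [i1 [B1 O1]] /(cons_to U) [i2 [B2 O2]].
have [hs1 su1 hi1] := B1; have [hs2 su2 hi2] := B2.
case: O1 => [[h1 h1'] | [h1 h1']]; case: O2 => [[h2 h2'] | [h2 h2']].
- have e : i1 = i2 by apply: (uniq_pos U); [lia | lia | by rewrite (avP h1) (avP h2)].
  subst i1.
  apply: (cons_of (p := (i2 + (b - a))%N) U).
    split; first lia.
      by move=> x hx; apply: su2; lia.
    move=> j hj; have := hi1 j hj; have := hi2 j hj.
    have h3 : j = (i2 + (b - a))%N <-> av s j = b.
      split; first by move=> ->; rewrite (avP h1').
      move=> e; apply: (uniq_pos U); [lia | lia | by rewrite e (avP h1')].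
    move: h3; lia.
  left; split => //.
  by have -> : (i2 + (b - a) + (c - b) = i2 + (c - a))%N by lia.
- have e : i1 = (i2 + (c - a))%N.
    by apply: (uniq_pos U); [lia | lia | by rewrite (avP h1) (avN h2')].
  have := NZ i1 ltac:(lia); rewrite (avP h1); subst i1; move: h1; rewrite h2'; lia.
- have e : (i1 + (b - a))%N = i2.
    by apply: (uniq_pos U); [lia | lia | by rewrite (avN h1') (avP h2)].
  have := NZ i2 ltac:(lia); rewrite (avP h2); move: h1'; rewrite e h2; lia.
- have e : (i1 + (b - a))%N = (i2 + (c - a))%N.
    by apply: (uniq_pos U); [lia | lia | by rewrite (avN h1') (avN h2')].
  apply: (cons_of (p := i2) U).
    split; first lia.
      by move=> x hx; apply: su2; lia.
    move=> j hj; have := hi1 j hj; have := hi2 j hj.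
    have h3 : j = i1 <-> av s j = b.
      split; first by move=> ->; rewrite (avN h1).
      move=> e'; apply: (uniq_pos U); [lia | lia | by rewrite e' (avN h1)].
    move: h3; lia.
  right; split => //.
  by have -> : (i2 + (c - b) = i1)%N by lia.
Qed.
Arguments lemX {s a b c}.

Lemma lemY s a b c : uniq (map absz s) ->
  (forall j, (j < size s)%N -> (0 < av s j)%N) -> (a < b < c)%N ->
  conserved_in s b c -> conserved_in s a c -> conserved_in s a b.
Proof.
move=> U NZ habc /(cons_to U) [i1 [B1 O1]] /(cons_to U) [i2 [B2 O2]].
have [hs1 su1 hi1] := B1; have [hs2 su2 hi2] := B2.
case: O1 => [[h1 h1'] | [h1 h1']]; case: O2 => [[h2 h2'] | [h2 h2']].
- have e : (i1 + (c - b))%N = (i2 + (c - a))%N.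
    by apply: (uniq_pos U); [lia | lia | by rewrite (avP h1') (avP h2')].
  apply: (cons_of (p := i2) U).
    split; first lia.
      by move=> x hx; apply: su2; lia.
    move=> j hj; have := hi1 j hj; have := hi2 j hj.
    have h3 : j = i1 <-> av s j = b.
      split; first by move=> ->; rewrite (avP h1).
      move=> e'; apply: (uniq_pos U); [lia | lia | by rewrite e' (avP h1)].
    move: h3; lia.
  left; split => //.
  by have -> : (i2 + (b - a) = i1)%N by lia.
- have e : (i1 + (c - b))%N = i2.
    by apply: (uniq_pos U); [lia | lia | by rewrite (avP h1') (avN h2)].
  have := NZ i2 ltac:(lia); rewrite (avN h2); move: h1'; rewrite e h2; lia.
- have e : i1 = (i2 + (c - a))%N.
    by apply: (uniq_pos U); [lia | lia | by rewrite (avN h1) (avP h2')].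
  have := NZ i1 ltac:(lia); rewrite (avN h1); move: h1; rewrite e h2'; lia.
- have e : i1 = i2.
    by apply: (uniq_pos U); [lia | lia | by rewrite (avN h1) (avN h2)].
  subst i1.
  apply: (cons_of (p := (i2 + (c - b))%N) U).
    split; first lia.
      by move=> x hx; apply: su2; lia.
    move=> j hj; have := hi1 j hj; have := hi2 j hj.
    have h3 : j = (i2 + (c - b))%N <-> av s j = b.
      split; first by move=> ->; rewrite (avN h1').
      move=> e'; apply: (uniq_pos U); [lia | lia | by rewrite e' (avN h1')].
    move: h3; lia.
  right; split => //.
  by have -> : (i2 + (c - b) + (b - a) = i2 + (c - a))%N by lia.
Qed.
Arguments lemY {s a b c}.

Lemma gf_facts n P s : genome_family n P -> s \in P ->
  uniq (map absz s) /\ (forall j, (j < size s)%N -> (0 < av s j)%N).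
Proof.
move=> [_ [_ H]] sP; have [pe _ _] := H s sP.
split; first by rewrite (perm_uniq pe) iota_uniq.
move=> j hj.
have : av s j \in map absz s.
  by rewrite /av -(nth_map 0%R 0%N) // mem_nth // size_map.
by rewrite (perm_mem pe) mem_iota; lia.
Qed.
Arguments gf_facts {n P s}.

Lemma consP n P x y : conserved n P (x, y) -> (x < y)%N ->
  forall s, s \in P -> conserved_in s x y.
Proof. by move=> [[/= -> _] | [_ H]] //; rewrite ltnn. Qed.
Arguments consP {n P x y}.

Lemma consX n P a b c : genome_family n P -> (a < b < c)%N ->
  conserved n P (a, b) -> conserved n P (a, c) -> conserved n P (b, c).
Proof.
move=> G h Hab Hac; right; split => /=; first lia.
move=> s sP; have [U NZ] := gf_facts G sP.
apply: (lemX U NZ h); [apply: (consP Hab) | apply: (consP Hac)] => //; lia.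
Qed.
Arguments consX {n P a b c}.

Lemma consY n P a b c : genome_family n P -> (a < b < c)%N ->
  conserved n P (b, c) -> conserved n P (a, c) -> conserved n P (a, b).
Proof.
move=> G h Hbc Hac; right; split => /=; first lia.
move=> s sP; have [U NZ] := gf_facts G sP.
apply: (lemY U NZ h); [apply: (consP Hbc) | apply: (consP Hac)] => //; lia.
Qed.
Arguments consY {n P a b c}.

Lemma front n P I f : in_frontiers n P I f ->
  [/\ (I.1 <= f <= I.2)%N, ((I.1 < f)%N -> conserved n P (I.1, f)) &
      ((f < I.2)%N -> conserved n P (f, I.2))].
Proof.
move=> [S [[h1 h2 hr hc] fS]]; split; first exact: hr.
  by move=> lt; apply: hc.
by move=> lt; apply: hc.
Qed.
Arguments front {n P I f}.

Lemma half n P I J f C1 C2 : genome_family n P ->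
  in_frontiers n P I f -> in_frontiers n P J f ->
  is_container n P I C1 -> is_container n P J C2 ->
  subinterval C1 C2 -> C1 = C2.
Proof.
case: C1 => p q; case: C2 => p2 q2; case: J => a' c'.
move=> G FI FJ [S1 sI1 _] [S2 sJ2 M2] sub12.
have [[hf1 hcI hcI'] [hf2 hcJ hcJ']] := (front FI, front FJ).
have SC1 := S1; case: S1 => lt1 cC1 nov1.
move: sI1 sJ2 sub12 hf2 hcJ hcJ' lt1; rewrite /subinterval /= => sI1 sJ2 sub12 hf2 hcJ hcJ' lt1.
have sJ1 : (p <= a')%N /\ (c' <= q)%N.
  split.
    case: (leqP p a') => // ha.
    have ca : conserved n P (a', f) by apply: hcJ; lia.
    case: (ltnP f q) => hfq.
      by exfalso; apply: (nov1 _ ca); rewrite /overlap /=; lia.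
    have cy : conserved n P (a', p).
      apply: (consY (c := q) G) => //; first lia.
      by have <- : f = q by lia.
    by exfalso; apply: (nov1 _ cy); rewrite /overlap /=; lia.
  case: (leqP c' q) => // hc.
  have cc : conserved n P (f, c') by apply: hcJ'; lia.
  case: (ltnP p f) => hpf.
    by exfalso; apply: (nov1 _ cc); rewrite /overlap /=; lia.
  have cx : conserved n P (q, c').
    apply: (consX (a := p) G) => //; first lia.
    by have -> : p = f by lia.
  by exfalso; apply: (nov1 _ cx); rewrite /overlap /=; lia.
have := M2 (p, q) SC1 sJ1; rewrite /subinterval /= => h.
by have [-> ->] : p = p2 /\ q = q2 by lia.
Qed.
Arguments half {n P I J f C1 C2}.

Theorem lemma8 (n : nat) (P : seq (seq int)) (I J : sinterval) (f : nat)
  (C1 C2 : sinterval) :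
  (2 <= n)%N -> genome_family n P ->
  conserved n P I -> conserved n P J ->
  in_frontiers n P I f -> in_frontiers n P J f ->
  is_container n P I C1 -> is_container n P J C2 ->
  C1 = C2.
Proof.
move=> _ G _ _ FI FJ K1 K2.
have [[S1 sI1 _] [S2 sJ2 _]] := (K1, K2).
have [[hf1 _ _] [hf2 _ _]] := (front FI, front FJ).
case: S1 => lt1 _ nov1; case: S2 => lt2 cC2 _.
move: sI1 sJ2; rewrite /subinterval => sI1 sJ2.
have no := nov1 C2 cC2; rewrite /overlap in no.
have [s12 | s21] : subinterval C1 C2 \/ subinterval C2 C1.
  rewrite /subinterval; lia.
  exact: (half G FI FJ K1 K2 s12).
symmetry; exact: (half G FJ FI K2 K1 s21).
Qed.
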